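(* Let $G$ be a topological group with identity $e$ and let $\mathcal A$ be the collection of all open subgroups of $G$. Then $G$ is strongly totally separated with respect to its left uniformity (equivalently, with respect to its right uniformity) if and only if $\bigcap_{A\in\mathcal A}A=\{e\}$.
   Context: A topological group is a group with a topology making multiplication and inversion continuous. For $A\subseteq G$: $A_L=\{(x,y): x^{-1}y\in A\}$, $A_R=\{(x,y): yx^{-1}\in A\}$. The left (resp. right) uniformity is the uniformity on $G$ with base $\{W_L: W\text{ open}, e\in W\}$ (resp. $\{W_R\}$). Sets $A,B$ are uniformly separated with respect to a uniformity $\mathcal U$ if some $U\in\mathcal U$ contains no $(x,y)$ with $x\in A$, $y\in B$. A uniform space $(X,\mathcal U)$ is strongly totally separated if for all $x\neq y$ in $X$ there is $V\subseteq X$ with $x\in V$, $y\notin V$, and $V$ uniformly separated from $X\setminus V$. *)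

(* Defs.v *)
From Stdlib Require Import Classical.
Set Implicit Arguments.

Section Defs.
Variable G : Type.

Definition is_topology (is_open : (G -> Prop) -> Prop) : Prop :=
  is_open (fun _ => True) /\
  (forall U V, is_open U -> is_open V -> is_open (fun x => U x /\ V x)) /\
  (forall F : (G -> Prop) -> Prop, (forall U, F U -> is_open U) ->
     is_open (fun x => exists U, F U /\ U x)).

Definition is_group (mul : G -> G -> G) (inv : G -> G) (e : G) : Prop :=
  (forall x y z, mul x (mul y z) = mul (mul x y) z) /\
  (forall x, mul e x = x) /\ (forall x, mul x e = x) /\
  (forall x, mul (inv x) x = e) /\ (forall x, mul x (inv x) = e).

(* Multiplication G x G -> G continuous for the product topology:
   the preimage of every open set is open in G x G, i.e. every point of it
   has an open box neighbourhood contained in it. *)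
Definition mul_continuous (is_open : (G -> Prop) -> Prop) (mul : G -> G -> G) : Prop :=
  forall U, is_open U -> forall x y, U (mul x y) ->
    exists V W, is_open V /\ is_open W /\ V x /\ W y /\
      (forall a b, V a -> W b -> U (mul a b)).

Definition inv_continuous (is_open : (G -> Prop) -> Prop) (inv : G -> G) : Prop :=
  forall U, is_open U -> is_open (fun x => U (inv x)).

Definition is_topological_group (is_open : (G -> Prop) -> Prop)
  (mul : G -> G -> G) (inv : G -> G) (e : G) : Prop :=
  is_topology is_open /\ is_group mul inv e /\
  mul_continuous is_open mul /\ inv_continuous is_open inv.

Definition setL (mul : G -> G -> G) (inv : G -> G) (A : G -> Prop) : G -> G -> Prop :=
  fun x y => A (mul (inv x) y).
Definition setR (mul : G -> G -> G) (inv : G -> G) (A : G -> Prop) : G -> G -> Prop :=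
  fun x y => A (mul y (inv x)).

(* Entourages of the left / right uniformity: the filter generated by the
   base {W_L : W open, e in W} (resp. {W_R}). *)
Definition left_entourage (is_open : (G -> Prop) -> Prop) (mul : G -> G -> G)
  (inv : G -> G) (e : G) (E : G -> G -> Prop) : Prop :=
  exists W, is_open W /\ W e /\ (forall x y, setL mul inv W x y -> E x y).
Definition right_entourage (is_open : (G -> Prop) -> Prop) (mul : G -> G -> G)
  (inv : G -> G) (e : G) (E : G -> G -> Prop) : Prop :=
  exists W, is_open W /\ W e /\ (forall x y, setR mul inv W x y -> E x y).

Definition unif_separated (ent : (G -> G -> Prop) -> Prop) (A B : G -> Prop) : Prop :=
  exists U, ent U /\ (forall x y, A x -> B y -> ~ U x y).

Definition strongly_totally_separated (ent : (G -> G -> Prop) -> Prop) : Prop :=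
  forall x y : G, x <> y ->
    exists V : G -> Prop, V x /\ ~ V y /\ unif_separated ent V (fun z => ~ V z).

Definition open_subgroup (is_open : (G -> Prop) -> Prop) (mul : G -> G -> G)
  (inv : G -> G) (e : G) (A : G -> Prop) : Prop :=
  is_open A /\ A e /\ (forall x y, A x -> A y -> A (mul x y)) /\
  (forall x, A x -> A (inv x)).

Definition open_subgroups_meet_trivial (is_open : (G -> Prop) -> Prop)
  (mul : G -> G -> G) (inv : G -> G) (e : G) : Prop :=
  forall x, (forall A, open_subgroup is_open mul inv e A -> A x) <-> x = e.

End Defs.

(* Main.v *)
Require Import Defs.
From Stdlib Require Import Classical FunctionalExtensionality PropExtensionality.

Set Implicit Arguments.
Lemma set_ext (G : Type) (A B : G -> Prop) : (forall x, A x <-> B x) -> A = B.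
Proof. intro H. apply functional_extensionality; intro x. apply propositional_extensionality; auto. Qed.

Lemma transl_open (G : Type) (is_open : (G -> Prop) -> Prop)
  (mul : G -> G -> G) (inv : G -> G) (e : G)
  (HG : is_topological_group is_open mul inv e) (U : G -> Prop) (c : G) :
  is_open U -> is_open (fun b => U (mul c b)).
Proof.
  destruct HG as [[_ [_ Hun]] [_ [Hm _]]]. intro HU.
  assert (E : (fun b => U (mul c b)) =
    (fun b => exists V, (is_open V /\ forall t, V t -> U (mul c t)) /\ V b)).
  { apply set_ext; intro b; split.
    - intro Hb. destruct (Hm U HU c b Hb) as [V1 [W1 [_ [HW1 [HV1c [HW1b Hall]]]]]].
      exists W1. repeat split; auto.
    - intros [V [[_ HV] Vb]]. auto. }
  rewrite E. apply Hun. intros V [HV _]. exact HV.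
Qed.

Lemma subgroup_open (G : Type) (is_open : (G -> Prop) -> Prop)
  (mul : G -> G -> G) (inv : G -> G) (e : G)
  (HG : is_topological_group is_open mul inv e) (A W : G -> Prop) :
  (forall x y, A x -> A y -> A (mul x y)) ->
  is_open W -> W e -> (forall w, W w -> A w) -> is_open A.
Proof.
  intros Hmul HW We WA.
  pose proof HG as HG'.
  destruct HG as [[_ [_ Hun]] [[Has [Hl [Hr [Hil Hir]]]] _]].
  assert (E : A = (fun z => exists U, (is_open U /\ forall b, U b -> A b) /\ U z)).
  { apply set_ext; intro z; split.
    - intro Az. exists (fun b => W (mul (inv z) b)). split; [split|].
      + apply (transl_open HG'); auto.
      + intros b Hb. replace b with (mul z (mul (inv z) b)).
        * apply Hmul; auto.
        * rewrite Has, Hir, Hl. reflexivity.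
      + rewrite Hil. exact We.
    - intros [U [[_ HU] Uz]]. auto. }
  rewrite E. apply Hun. intros U [HU _]. exact HU.
Qed.

Lemma inv_unique (G : Type) (mul : G -> G -> G) (inv : G -> G) (e : G) :
  is_group mul inv e -> forall a b, mul a b = e -> b = inv a.
Proof.
  intros [Has [Hl [Hr [Hil Hir]]]] a b H.
  rewrite <- (Hl b), <- (Hil a), <- Has, H, Hr. reflexivity.
Qed.

Lemma inv_mul (G : Type) (mul : G -> G -> G) (inv : G -> G) (e : G) :
  is_group mul inv e -> forall a b, inv (mul a b) = mul (inv b) (inv a).
Proof.
  intros Hg a b. symmetry. apply (inv_unique Hg).
  destruct Hg as [Has [Hl [Hr [Hil Hir]]]].
  rewrite <- Has, (Has b), Hir, Hl, Hir. reflexivity.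
Qed.

Lemma inv_e (G : Type) (mul : G -> G -> G) (inv : G -> G) (e : G) :
  is_group mul inv e -> inv e = e.
Proof. intros [Has [Hl [Hr [Hil Hir]]]]. rewrite <- (Hr (inv e)). apply Hil. Qed.

Lemma sym_open (G : Type) (is_open : (G -> Prop) -> Prop)
  (mul : G -> G -> G) (inv : G -> G) (e : G)
  (HG : is_topological_group is_open mul inv e) (W : G -> Prop) :
  is_open W -> W e -> is_open (fun w => W w /\ W (inv w)) /\ (W e /\ W (inv e)).
Proof.
  destruct HG as [[_ [Hint _]] [Hg [_ Hinv]]]. intros HW We.
  split.
  - apply Hint; auto.
  - rewrite (inv_e Hg). auto.
Qed.

Lemma left_dir (G : Type) (is_open : (G -> Prop) -> Prop)
  (mul : G -> G -> G) (inv : G -> G) (e : G)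
  (HG : is_topological_group is_open mul inv e) :
  strongly_totally_separated (left_entourage is_open mul inv e) <->
     open_subgroups_meet_trivial is_open mul inv e.
Proof.
  pose proof HG as HG'.
  destruct HG as [_ [Hg _]]. pose proof Hg as Hg'.
  destruct Hg as [Has [Hl [Hr [Hil Hir]]]].
  split.
  - intros Hsts x. split.
    + intro Hall. apply NNPP. intro Hne.
      destruct (Hsts e x (fun h => Hne (eq_sym h))) as [V [Ve [nVx [U [[W [HW [We HWU]]] Hsep]]]]].
      assert (KV : forall a b, V a -> W (mul (inv a) b) -> V b).
      { intros a b Va Wab. apply NNPP. intro nVb. exact (Hsep a b Va nVb (HWU a b Wab)). }
      destruct (sym_open HG' W HW We) as [HW' HWe'].
      set (A := fun g => forall v, V (mul v g) <-> V v).
      assert (Ax : A x).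
      { apply Hall; split; [|split; [|split]].
      + apply (subgroup_open HG' A (fun w => W w /\ W (inv w))); auto.
        * unfold A. intros g h Ag Ah v. rewrite Has. rewrite Ah. apply Ag.
        * unfold A. intros w [Ww Wiw] v. split.
          -- intro Hvw. apply (KV (mul v w)); auto. rewrite (inv_mul Hg').
             rewrite <- Has, Hil, Hr. exact Wiw.
          -- intro Vv. apply (KV v); auto. rewrite Has, Hil, Hl. exact Ww.
      + unfold A. intro v. rewrite Hr. tauto.
      + unfold A. intros g h Ag Ah v. rewrite Has. rewrite Ah. apply Ag.
      + unfold A. intros g Ag v. rewrite <- (Ag (mul v (inv g))).
        rewrite <- Has, Hil, Hr. tauto. }
      apply nVx. rewrite <- (Hl x). apply (proj2 (Ax e)). exact Ve.
    + intros -> A [_ [Ae _]]. exact Ae.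
  - intros Hmt x y Hne.
    assert (Hn : mul (inv x) y <> e).
    { intro H. apply Hne. apply (inv_unique Hg') in H.
      rewrite H. apply (inv_unique Hg'). apply Hil. }
    destruct (not_all_ex_not _ _ (fun H => Hn (proj1 (Hmt _) H))) as [A HA].
    apply imply_to_and in HA. destruct HA as [[HAo [Ae [Am Ai]]] nA].
    exists (fun z => A (mul (inv x) z)). split; [|split].
    + rewrite Hil. exact Ae.
    + exact nA.
    + exists (setL mul inv A). split.
      * exists A. auto.
      * intros a b Va nVb Hab. apply nVb. unfold setL in Hab.
        replace (mul (inv x) b) with (mul (mul (inv x) a) (mul (inv a) b)).
        -- apply Am; auto.
        -- rewrite <- Has, (Has a), Hir, Hl. reflexivity.
Qed.

Lemma right_dir (G : Type) (is_open : (G -> Prop) -> Prop)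
  (mul : G -> G -> G) (inv : G -> G) (e : G)
  (HG : is_topological_group is_open mul inv e) :
  strongly_totally_separated (right_entourage is_open mul inv e) <->
     open_subgroups_meet_trivial is_open mul inv e.
Proof.
  pose proof HG as HG'.
  destruct HG as [_ [Hg _]]. pose proof Hg as Hg'.
  destruct Hg as [Has [Hl [Hr [Hil Hir]]]].
  split.
  - intros Hsts x. split.
    + intro Hall. apply NNPP. intro Hne.
      destruct (Hsts e x (fun h => Hne (eq_sym h))) as [V [Ve [nVx [U [[W [HW [We HWU]]] Hsep]]]]].
      assert (KV : forall a b, V a -> W (mul b (inv a)) -> V b).
      { intros a b Va Wab. apply NNPP. intro nVb. exact (Hsep a b Va nVb (HWU a b Wab)). }
      destruct (sym_open HG' W HW We) as [HW' HWe'].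
      set (A := fun g => forall v, V (mul g v) <-> V v).
      assert (Ax : A x).
      { apply Hall; split; [|split; [|split]].
      + apply (subgroup_open HG' A (fun w => W w /\ W (inv w))); auto.
        * unfold A. intros g h Ag Ah v. rewrite <- Has. rewrite Ag. apply Ah.
        * unfold A. intros w [Ww Wiw] v. split.
          -- intro Hvw. apply (KV (mul w v)); auto. rewrite (inv_mul Hg').
             rewrite Has, Hir, Hl. exact Wiw.
          -- intro Vv. apply (KV v); auto. rewrite <- Has, Hir, Hr. exact Ww.
      + unfold A. intro v. rewrite Hl. tauto.
      + unfold A. intros g h Ag Ah v. rewrite <- Has. rewrite Ag. apply Ah.
      + unfold A. intros g Ag v. rewrite <- (Ag (mul (inv g) v)).
        rewrite Has, Hir, Hl. tauto. }
      apply nVx. rewrite <- (Hr x). apply (proj2 (Ax e)). exact Ve.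
    + intros -> A [_ [Ae _]]. exact Ae.
  - intros Hmt x y Hne.
    assert (Hn : mul y (inv x) <> e).
    { intro H. apply Hne. rewrite <- (Hr y), <- (Hil x), Has, H, Hl. reflexivity. }
    destruct (not_all_ex_not _ _ (fun H => Hn (proj1 (Hmt _) H))) as [A HA].
    apply imply_to_and in HA. destruct HA as [[HAo [Ae [Am Ai]]] nA].
    exists (fun z => A (mul z (inv x))). split; [|split].
    + rewrite Hir. exact Ae.
    + exact nA.
    + exists (setR mul inv A). split.
      * exists A. auto.
      * intros a b Va nVb Hab. apply nVb. unfold setR in Hab.
        replace (mul b (inv x)) with (mul (mul b (inv a)) (mul a (inv x))).
        -- apply Am; auto.
        -- rewrite <- Has, (Has (inv a)), Hil, Hl. reflexivity.
Qed.

Theorem mainTheorem17 (G : Type) (is_open : (G -> Prop) -> Prop)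
  (mul : G -> G -> G) (inv : G -> G) (e : G)
  (HG : is_topological_group is_open mul inv e) :
  (strongly_totally_separated (left_entourage is_open mul inv e) <->
     open_subgroups_meet_trivial is_open mul inv e) /\
  (strongly_totally_separated (right_entourage is_open mul inv e) <->
     open_subgroups_meet_trivial is_open mul inv e).
Proof. split; [apply left_dir | apply right_dir]; exact HG. Qed.
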